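(* Let $F$ be a uniformly recurrent set. Then every $F$-thin bifix code $X\subset F$ is finite, and every finite bifix code $X\subset F$ is contained in a finite $F$-maximal bifix code $Y\subset F$.
   Context: $A$ is a finite alphabet. $F\subset A^*$ is uniformly recurrent if it is nonempty, closed under factors, every $w\in F$ has some letter $a$ with $wa\in F$, and for every $u\in F$ there is $n\ge1$ such that $u$ is a factor of every word of $F\cap A^n$. A bifix code is a set of nonempty words none of which is a proper prefix or proper suffix of another. $X\subset F$ is $F$-thin if some word of $F$ is not a factor of any word of $X$; it is $F$-maximal bifix if not properly contained in any bifix code contained in $F$. *)

(* Defs.v *)
From mathcomp Require Import all_boot.
Set Implicit Arguments. Unset Strict Implicit. Unset Printing Implicit Defensive.

Section Words.
Variable A : finType.
Definition wset := seq A -> Prop.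

Definition wsubset (X Y : wset) : Prop := forall w, X w -> Y w.

Definition wfinite (X : wset) : Prop :=
  exists s : seq (seq A), forall w, X w <-> w \in s.

Definition factor (u w : seq A) : bool := infix u w.

Definition uniformly_recurrent (F : wset) : Prop :=
  [/\ exists w, F w,
      (forall u w, F w -> factor u w -> F u),
      (forall w, F w -> exists a : A, F (rcons w a)) &
      (forall u, F u -> exists n, 1 <= n /\
          forall w, F w -> size w = n -> factor u w)].

Definition proper_prefix (u w : seq A) : bool := prefix u w && (u != w).
Definition proper_suffix (u w : seq A) : bool := suffix u w && (u != w).

Definition bifix_code (X : wset) : Prop :=
  (forall x, X x -> x <> [::]) /\
  (forall x y, X x -> X y -> ~~ proper_prefix x y /\ ~~ proper_suffix x y).

Definition F_thin (F X : wset) : Prop :=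
  exists w, F w /\ forall x, X x -> ~~ factor w x.

Definition F_maximal_bifix (F X : wset) : Prop :=
  [/\ bifix_code X, wsubset X F &
      forall Y, bifix_code Y -> wsubset Y F -> wsubset X Y -> wsubset Y X].
End Words.

(* Main.v *)
Require Import Defs.
From mathcomp Require Import all_boot.
From Stdlib Require Import ClassicalEpsilon Classical Lia.
Set Implicit Arguments. Unset Strict Implicit. Unset Printing Implicit Defensive.

Definition asbool (P : Prop) : bool :=
  if excluded_middle_informative P then true else false.
Lemma asboolP (P : Prop) : reflect P (asbool P).
Proof. rewrite /asbool; case: excluded_middle_informative => h; by constructor. Qed.

Lemma count_split (T : eqType) (a b : pred T) (p0 : T) (s : seq T) :
  {in s, forall p, a p = b p || (p == p0)} -> ~~ b p0 ->
  count a s = count b s + count (pred1 p0) s.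
Proof.
move=> H nb; rewrite (eq_in_count H) -count_predUI.
rewrite (@eq_count _ (predI b (pred1 p0)) pred0) ?count_pred0 ?addn0 //.
by move=> p /=; case: eqP => [->|]; rewrite ?andbT ?andbF // (negbTE nb).
Qed.

Lemma count_part (T : eqType) (a b : pred T) (s : seq T) :
  {in s, forall p, a p || b p} -> {in s, forall p, ~~ (a p && b p)} ->
  count a s + count b s = size s.
Proof.
move=> H1 H2; rewrite -count_predUI.
rewrite (eq_in_count (a2 := predT)) ?count_predT; last by move=> p /H1.
rewrite (eq_in_count (a2 := pred0)) ?count_pred0 ?addn0 //.
by move=> p /H2 /negbTE.
Qed.

Lemma core (occ : nat -> nat -> Prop) (n R L K j : nat) :
  (forall p q, occ p q -> p < q) ->
  (forall p q q', occ p q -> occ p q' -> q = q') ->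
  (forall p p' q, occ p q -> occ p' q -> p = p') ->
  (forall p, p < R -> exists q, occ p q) ->
  (forall e, L < e -> e <= n -> exists p, occ p e) ->
  occ 0 n -> L < K -> 0 < j -> j + K <= R -> R <= n -> j + K < n ->
  (forall p q, p < q -> q <= K -> (occ (j + p) (j + q) <-> occ p q)) ->
  False.
Proof.
move=> H1 U1 U2 HS HE H0 LK j0 jR Rn jn W.
pose P c p := asbool (exists q, c < q /\ occ p q).
pose I c p := asbool (exists q, q <= c /\ occ p q).
pose cross c := count (P c) (iota 0 c).
have step: forall c, c < R -> L < c.+1 -> c.+1 <= n -> cross c.+1 = cross c.
  move=> c cR Lc cn.
  have [p0 o0] := HE _ Lc cn.
  have [q0 oc] := HS _ cR.
  have Pcc : P c c by apply/asboolP; exists q0; split=> //; exact: H1 oc.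
  have E1 : count (P c) (iota 0 c.+1) = cross c + 1.
    by rewrite /cross -addn1 iotaD count_cat /= Pcc.
  have E2 : count (P c) (iota 0 c.+1) = cross c.+1 + count (pred1 p0) (iota 0 c.+1).
    apply: count_split.
      move=> p _; apply/asboolP/orP.
        move=> [q [cq oq]]; case: (eqVneq q c.+1) => [eq|nq].
          by right; apply/eqP; apply: U2 oq _; rewrite eq.
        left; apply/asboolP; exists q; split=> //.
        by rewrite ltn_neqAle eq_sym nq.
      case=> [/asboolP [q [cq oq]]|/eqP ->].
        by exists q; split=> //; exact: ltnW.
      by exists c.+1; split.
    apply/asboolP => -[q [cq oq]].
    by move: (U1 _ _ _ oq o0) cq => ->; rewrite ltnn.
  have p0in : p0 \in iota 0 c.+1 by rewrite mem_iota add0n; exact: H1 o0.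
  move: E2; rewrite (count_uniq_mem _ (iota_uniq _ _)) p0in E1 => /eqP.
  by rewrite eqn_add2r => /eqP.
have const: forall i, i <= j -> cross (K + i) = cross K.
  elim=> [|i IH] ij; first by rewrite addn0.
  have ij' : i < j := ij.
  have h1 : K + i < j + K by rewrite addnC ltn_add2r.
  rewrite addnS step; first by rewrite IH // ltnW.
  - exact: leq_trans h1 jR.
  - by rewrite ltnS; apply: leq_trans (ltnW LK) (leq_addr i K).
  - exact: ltn_trans h1 jn.
have part: forall a, a + K <= R ->
    count (I (a + K)) (iota a K) + count (P (a + K)) (iota a K) = K.
  move=> a aR; rewrite -[RHS](size_iota a K); apply: count_part => p.
    rewrite mem_iota => /andP [ap pa].
    have [q oq] := HS p (leq_trans pa aR).
    by case: (leqP q (a + K)) => h; apply/orP; [left|right]; apply/asboolP; exists q.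
  move=> _; apply/andP => -[/asboolP [q [h1 o1]] /asboolP [q' [h2 o2]]].
  by move: (U1 _ _ _ o1 o2) h1 => ->; rewrite leqNgt h2.
have content : count (I (j + K)) (iota j K) = count (I K) (iota 0 K).
  rewrite (_ : iota j K = map (addn j) (iota 0 K)); last by rewrite -iotaDl addn0.
  rewrite count_map; apply: eq_in_count => p.
  rewrite mem_iota add0n => /= pK; apply/asboolP/asboolP.
    move=> [q [qK oq]]; have jq := H1 _ _ oq.
    have jq' : j <= q by apply: leq_trans (ltnW jq); exact: leq_addr.
    exists (q - j); rewrite -(subnKC jq') in oq.
    have pq : p < q - j by rewrite ltn_subRL.
    split; first by rewrite leq_subLR.
    have qK' : q - j <= K by rewrite leq_subLR.
    by apply/(W _ _ pq qK').
  move=> [q [qK oq]]; exists (j + q); split; first by rewrite leq_add2l.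
  by apply/W => //; exact: H1 oq.
have h0 := part 0; rewrite add0n in h0; have {}h0 := h0 (leq_trans (leq_addl _ _) jR).
have hj := part j jR.
have c0 : 0 < count (P (j + K)) (iota 0 j).
  rewrite -has_count; apply/hasP; exists 0; first by rewrite mem_iota.
  by apply/asboolP; exists n.
have : cross (j + K) = cross K by rewrite addnC const.
rewrite /cross -{1}[j + K]add0n iotaD count_cat add0n.
move: hj; rewrite content => hj.
have eqc : count (P (j + K)) (iota j K) = count (P K) (iota 0 K).
  by apply/eqP; rewrite -(eqn_add2l (count (I K) (iota 0 K))) hj h0.
rewrite eqc => /eqP; rewrite -{2}[count (P K) _]add0n eqn_add2r => /eqP e.
by rewrite e in c0.
Qed.
Definition allw (A : finType) k : seq (seq A) := [seq val t | t <- enum {: k.-tuple A}].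
Lemma allwP (A : finType) k (u : seq A) : size u = k -> u \in allw A k.
Proof. move=> Hu; apply/mapP; exists (Tuple (introT eqP Hu)) => //; by rewrite mem_enum. Qed.
Definition allw_le (A : finType) M := flatten [seq allw A k | k <- iota 0 M.+1].
Lemma allw_leP (A : finType) M (u : seq A) : size u <= M -> u \in allw_le A M.
Proof.
move=> Hu; apply/flattenP; exists (allw A (size u)); last exact: allwP.
by apply/mapP; exists (size u) => //; rewrite mem_iota add0n ltnS.
Qed.
Lemma bounded_finite (A : finType) (P : wset A) M :
  (forall w, P w -> size w <= M) -> wfinite P.
Proof.
move=> H; exists (filter (fun w => asbool (P w)) (allw_le A M)) => w.
rewrite mem_filter; split.
  by move=> Pw; rewrite (introT (asboolP _) Pw) allw_leP // H.
by case/andP=> /asboolP.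
Qed.
Definition newc (A : finType) (F X Z : wset A) (w : seq A) : Prop :=
  X w \/ [/\ F w, w <> [::],
     (forall x, X x -> ~~ proper_prefix w x /\ ~~ proper_suffix w x) &
     (forall v, proper_prefix v w || proper_suffix v w -> ~ Z v)].

Fixpoint Yle (A : finType) (F X : wset A) (k : nat) : wset A := fun w =>
  match k with
  | 0 => False
  | k'.+1 => Yle F X k' w \/ (size w = k'.+1 /\ newc F X (Yle F X k') w)
  end.

Definition Ygr (A : finType) (F X : wset A) : wset A := fun w => Yle F X (size w) w.

Lemma Yle_size (A : finType) (F X : wset A) k w : Yle F X k w -> size w <= k.
Proof.
elim: k => [|k IH] //= [/IH|[->]] //; by move=> /leqW.
Qed.

Lemma Yle_iff (A : finType) (F X : wset A) k w :
  Yle F X k w <-> size w <= k /\ Ygr F X w.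
Proof.
rewrite /Ygr; elim: k => [|k IH] /=.
  by split=> // -[]; rewrite leqn0 => /eqP ->.
split.
  case=> [/IH [h1 h2]|[e h]]; first by split=> //; apply: leqW.
  by rewrite e /=; split=> //; right.
move=> [hs hy]; rewrite leq_eqVlt in hs; case/orP: hs => [/eqP he|hlt].
  by rewrite he in hy; exact: hy.
by left; apply/IH.
Qed.

Lemma size_pp (A : finType) (v w : seq A) :
  proper_prefix v w || proper_suffix v w -> size v < size w.
Proof.
case/orP => /andP [h ne].
  move: h; case/prefixP => t E; rewrite E in ne *; move: ne; rewrite size_cat.
  case: t E => [|a t] E; first by rewrite cats0 eqxx.
  by move=> _ /=; rewrite addnS ltnS leq_addr.
move: h; case/suffixP => t E; rewrite E in ne *; move: ne; rewrite size_cat.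
case: t E => [|a t] E; first by rewrite eqxx.
by move=> _ /=; rewrite addSn ltnS leq_addl.
Qed.

Lemma Ychar (A : finType) (F X : wset A) w :
  ~ X [::] -> Ygr F X w <-> newc F X (Ygr F X) w.
Proof.
move=> X0; rewrite {1}/Ygr; case Ew: (size w) => [|k] /=.
  move/eqP: Ew; rewrite size_eq0 => /eqP ->; split=> // -[] // [] //.
have Hs: size w = k.+1 by [].
split.
  case=> [/Yle_size|[_]]; first by rewrite Ew ltnn.
  case=> [?|[h1 h2 h3 h4]]; [by left|right; split=> // v hv].
  by move=> hyv; apply: (h4 v hv); apply/Yle_iff; split=> //; move: (size_pp hv); rewrite Ew.
move=> H; right; split=> //.
case: H => [?|[h1 h2 h3 h4]]; [by left|right; split=> // v hv].
by move/Yle_iff => [_]; apply: h4.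
Qed.

Lemma Y_props (A : finType) (F X : wset A) : bifix_code X -> wsubset X F ->
  F_maximal_bifix F (Ygr F X) /\ wsubset X (Ygr F X).
Proof.
move=> bX XF.
have X0 : ~ X [::] by move=> h; exact: (bX.1 _ h).
have key : forall x y, Ygr F X x -> Ygr F X y ->
    proper_prefix x y || proper_suffix x y -> False.
  move=> x y /(Ychar _ _ X0) Yx /[dup] Yy' /(Ychar _ _ X0) Yy h.
  case: Yy => [Xy|[_ _ _ h4]]; last by apply: (h4 x h); apply/(Ychar _ _ X0).
  case: Yx => [Xx|[_ _ h3 _]].
    by have [/negbTE n1 /negbTE n2] := bX.2 x y Xx Xy; rewrite n1 n2 in h.
  by have [/negbTE n1 /negbTE n2] := h3 y Xy; rewrite n1 n2 in h.
have XY : wsubset X (Ygr F X) by move=> w Xw; apply/(Ychar _ _ X0); left.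
split=> //; split.
- split.
    by move=> x /(Ychar _ _ X0) [Xx|[_ ne _ _]]; [exact: (bX.1 x Xx)|exact: ne].
  move=> x y Yx Yy; split; apply/negP => h; apply: (key x y Yx Yy); by rewrite h ?orbT.
- by move=> w /(Ychar _ _ X0) [/XF|[]].
- move=> Z bZ ZF YZ z Zz; apply/(Ychar _ _ X0); right; split.
  + exact: ZF.
  + exact: bZ.1.
  + by move=> x Xx; apply: bZ.2 => //; apply: YZ; apply: XY.
  + move=> v hv Yv; have [n1 n2] := bZ.2 v z (YZ v Yv) Zz.
    by rewrite (negbTE n1) (negbTE n2) in hv.
Qed.

Lemma Y_nonempty (A : finType) (F X : wset A) v :
  ~ X [::] -> Ygr F X v -> v <> [::].
Proof. by move=> X0 /(Ychar _ _ X0) [Xv e|[_ ne _ _]] //; rewrite e in Xv. Qed.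

Lemma long_cover (A : finType) (F X : wset A) L u :
  ~ X [::] -> (forall x, X x -> size x <= L) -> F u -> L < size u ->
  ~ Ygr F X u ->
  exists k, [/\ 0 < k, k < size u & Ygr F X (take k u) \/ Ygr F X (drop k u)].
Proof.
move=> X0 XL Fu Lu nY; apply: NNPP => H; apply: nY; apply/(Ychar _ _ X0); right.
split=> //.
- by move=> e; rewrite e in Lu.
- move=> x Xx; split; apply/negP => h.
    by have := size_pp (introT orP (or_introl h)); move=> c; have := leq_trans c (XL x Xx); rewrite ltnNge (ltnW Lu).
  by have := size_pp (introT orP (or_intror h)); move=> c; have := leq_trans c (XL x Xx); rewrite ltnNge (ltnW Lu).
- move=> v hv Yv; apply: H; have sv := size_pp hv.
  have v0 : 0 < size v.
    by rewrite lt0n size_eq0; apply/eqP; exact: (Y_nonempty X0 Yv).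
  case/orP: hv => /andP [h _].
    rewrite prefixE in h; exists (size v); split=> //; left; by rewrite (eqP h).
  exists (size u - size v); split.
  + by rewrite subn_gt0.
  + by rewrite ltn_subrL v0 (leq_ltn_trans (leq0n _) sv).
  + by rewrite suffixE in h; right; rewrite (eqP h).
Qed.

Lemma long_member (A : finType) (F X : wset A) L y :
  ~ X [::] -> (forall x, X x -> size x <= L) -> Ygr F X y -> L < size y ->
  forall k, 0 < k -> k < size y -> ~ Ygr F X (take k y) /\ ~ Ygr F X (drop k y).
Proof.
move=> X0 XL /(Ychar _ _ X0) [Xy|[_ _ _ h4]] Ly.
  by have := XL _ Xy; rewrite leqNgt Ly.
move=> k k0 ky; split; apply: h4; apply/orP.
  left; rewrite /proper_prefix prefix_take /=; apply/eqP => e.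
  by have := congr1 size e; rewrite size_takel ?(ltnW ky) // => ek; rewrite ek ltnn in ky.
right; rewrite /proper_suffix suffix_drop /=; apply/eqP => e.
have := congr1 size e; rewrite size_drop => ek.
by move: (ltn_subrL k (size y)); rewrite ek ltnn k0 (leq_ltn_trans (leq0n _) ky).
Qed.

Ltac arith := repeat match goal with H : is_true (leq _ _) |- _ => move/leP: H
  | H : @eq nat _ _ |- _ => revert H end;
  rewrite -?plusE -?minusE; intros; try apply/leP; lia.

Lemma dropTake (A : Type) i j (s : seq A) : i <= j -> drop i (take j s) = take (j - i) (drop i s).
Proof. by move=> h; rewrite take_drop subnK. Qed.

Lemma slice_take (A : Type) p q K (s : seq A) : p <= q -> q <= K ->
  take (q - p) (drop p (take K s)) = take (q - p) (drop p s).
Proof.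
move=> pq qK; rewrite dropTake ?take_takel //; last exact: leq_trans pq qK.
exact: leq_sub2r.
Qed.

Lemma Y_bounded (A : finType) (F X : wset A) L B :
  (forall u w, F w -> factor u w -> F u) ->
  bifix_code X -> wsubset X F -> (forall x, X x -> size x <= L) ->
  (forall u, F u -> size u = L.+1 -> exists N,
      [/\ 0 < N, N <= B & forall w, F w -> size w = N -> factor u w]) ->
  forall y, Ygr F X y -> size y <= B + L + 1.
Proof.
move=> Ffac bX XF XL HB y Yy.
have X0 : ~ X [::] by move=> h; exact: (bX.1 _ h).
have [[bY YF _] _] := Y_props bX XF.
rewrite leqNgt; apply/negP => hn.
have Fy := YF y Yy.
have Ly : L < size y by arith.
have hm := long_member X0 XL Yy Ly.
pose sl p q := take (q - p) (drop p y).
pose occ p q := [/\ p < q, q <= size y & Ygr F X (sl p q)].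
have slcat : forall p m q, p <= m -> m <= q -> sl p q = sl p m ++ sl m q.
  move=> p m q pm mq; rewrite /sl.
  have -> : q - p = (m - p) + (q - m) by arith.
  by rewrite takeD drop_drop subnK.
have slsz : forall p q, p <= q -> q <= size y -> size (sl p q) = q - p.
  by move=> p q pq qn; rewrite /sl size_takel // size_drop leq_sub2r.
have nopp : forall a b, Ygr F X a -> Ygr F X (a ++ b) -> b = [::].
  move=> a [|c b] // Ya Yab; have := (bY.2 _ _ Ya Yab).1.
  rewrite /proper_prefix prefix_prefix /=; case: eqP => // e.
  by have := congr1 size e; rewrite size_cat /= => ?; arith.
have nops : forall a b, Ygr F X b -> Ygr F X (a ++ b) -> a = [::].
  move=> [|c a] b // Yb Yab; have := (bY.2 _ _ Yb Yab).2.
  rewrite /proper_suffix suffix_suffix /=; case: eqP => // e.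
  by have := congr1 size e; rewrite /= size_cat => ?; arith.
have U1 : forall p q q', occ p q -> occ p q' -> q = q'.
  have w1 : forall p q q', occ p q -> occ p q' -> q < q' -> False.
    move=> p q q' [pq qn Yq] [_ qn' Yq'] lt.
    rewrite (slcat p q q') ?(ltnW pq) ?(ltnW lt) // in Yq'.
    have := nopp _ _ Yq Yq' => /(congr1 size); rewrite slsz //= ?(ltnW lt) //.
    by move=> ?; arith.
  move=> p q q' o o'; case: (ltngtP q q') => // h.
    by case: (w1 _ _ _ o o' h).
  by case: (w1 _ _ _ o' o h).
have U2 : forall p p' q, occ p q -> occ p' q -> p = p'.
  have w2 : forall p p' q, occ p q -> occ p' q -> p < p' -> False.
    move=> p p' q [pq qn Yq] [pq' _ Yq'] lt.
    rewrite (slcat p p' q) ?(ltnW pq') ?(ltnW lt) // in Yq.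
    have := nops _ _ Yq' Yq => /(congr1 size); rewrite slsz //= ?(ltnW lt) //.
      by move=> ?; arith.
    arith.
  move=> p p' q o o'; case: (ltngtP p p') => // h.
    by case: (w2 _ _ _ o o' h).
  by case: (w2 _ _ _ o' o h).
have H1 : forall p q, occ p q -> p < q by move=> p q [].
have HS : forall p, p < size y - L -> exists q, occ p q.
  move=> p pR.
  have Fu : F (drop p y) by apply: Ffac Fy _; exact: infix_drop.
  have su : size (drop p y) = size y - p by rewrite size_drop.
  have eu : sl p (size y) = drop p y by rewrite /sl take_oversize // su.
  case: (classic (Ygr F X (drop p y))) => Yu.
    by exists (size y); split; [arith|done|rewrite eu].
  have Lu : L < size (drop p y) by rewrite su; arith.
  have [k [k0 ku [Yk|Yk]]] := long_cover X0 XL Fu Lu Yu.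
    exists (p + k); split; [arith|rewrite su in ku; arith|].
    by rewrite /sl addKn.
  rewrite drop_drop in Yk; case: (hm (k + p)) => //; [arith|rewrite su in ku; arith].
have HE : forall e, L < e -> e <= size y -> exists p, occ p e.
  move=> e Le en.
  have Fu : F (take e y) by apply: Ffac Fy _; exact: infix_take.
  have su : size (take e y) = e by rewrite size_takel.
  case: (classic (Ygr F X (take e y))) => Yu.
    by exists 0; split; [arith|done|rewrite /sl subn0 drop0].
  have Lu : L < size (take e y) by rewrite su.
  have [k [k0 ku [Yk|Yk]]] := long_cover X0 XL Fu Lu Yu.
    rewrite take_takel in Yk; last by rewrite su in ku; exact: ltnW.
    by case: (hm k) => //; rewrite su in ku; arith.
  exists k; split; [by rewrite su in ku|done|].
  by rewrite /sl take_drop subnK // ltnW // -su.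
have H0 : occ 0 (size y).
  by split; [arith|done|rewrite /sl subn0 drop0 take_size].
have Fu0 : F (take L.+1 y) by apply: Ffac Fy _; exact: infix_take.
have su0 : size (take L.+1 y) = L.+1 by rewrite size_takel.
have [N [N0 NB HN]] := HB _ Fu0 su0.
have Fw : F (take N (drop 1 y)).
  apply: Ffac Fy _; apply: infix_trans (infix_take _ _) (infix_drop _ _).
have sw : size (take N (drop 1 y)) = N by rewrite size_takel // size_drop; arith.
have := HN _ Fw sw; case/infixP => s1 [s2 ew].
have szN : N = size s1 + (L.+1 + size s2).
  by rewrite -sw ew !size_cat su0.
pose j := (size s1).+1.
have Hwin : take L.+1 (drop j y) = take L.+1 y.
  have e1 : drop (size s1) (take N (drop 1 y)) = take L.+1 y ++ s2.
    by rewrite ew drop_size_cat.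
  rewrite dropTake ?drop_drop in e1; last by rewrite szN leq_addr.
  have := congr1 (take L.+1) e1; rewrite take_size_cat // take_takel; last by arith.
  by rewrite addn1.
apply: (@core occ (size y) (size y - L) L L.+1 j) => //.
- by rewrite /j; arith.
- by rewrite /j; arith.
- by rewrite /j; arith.
- move=> p q pq qK; rewrite /occ.
  have e : sl (j + p) (j + q) = sl p q.
    rewrite /sl subnDl addnC -drop_drop -(slice_take _ (ltnW pq) qK) Hwin.
    by rewrite slice_take // ltnW.
  rewrite e; split; case=> *; split=> //; arith.
Qed.

Lemma unif_bound (A : finType) (F : wset A) K :
  (forall u, F u -> exists n, 1 <= n /\ forall w, F w -> size w = n -> factor u w) ->
  exists B, forall u, F u -> size u = K -> exists N,
      [/\ 0 < N, N <= B & forall w, F w -> size w = N -> factor u w].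
Proof.
move=> UR.
suff: forall s : seq (seq A), exists B, forall u, u \in s -> F u -> exists N,
      [/\ 0 < N, N <= B & forall w, F w -> size w = N -> factor u w].
  case/(_ (allw A K)) => B HB; exists B => u Fu su; apply: HB => //; exact: allwP.
elim=> [|u s [B IH]]; first by exists 0.
case: (classic (F u)) => Fu.
  have [n [n1 Hn]] := UR u Fu; exists (maxn B n) => v; rewrite in_cons.
  case/orP => [/eqP -> _|vs Fv].
    by exists n; split=> //; rewrite leq_maxr.
  have [N [N0 NB HN]] := IH v vs Fv; exists N; split=> //.
  exact: leq_trans NB (leq_maxl _ _).
exists B => v; rewrite in_cons; case/orP => [/eqP -> //|]; exact: IH.
Qed.

Lemma list_bound (A : finType) (s : seq (seq A)) : exists L, forall x, x \in s -> size x <= L.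
Proof.
elim: s => [|u s [L IH]]; first by exists 0.
exists (maxn (size u) L) => x; rewrite in_cons; case/orP => [/eqP ->|/IH h].
  exact: leq_maxl.
exact: leq_trans h (leq_maxr _ _).
Qed.

Theorem mainTheorem10 (A : finType) (F : wset A) :
  uniformly_recurrent F ->
  (forall X : wset A, bifix_code X -> wsubset X F -> F_thin F X -> wfinite X) /\
  (forall X : wset A, bifix_code X -> wsubset X F -> wfinite X ->
     exists Y : wset A, [/\ F_maximal_bifix F Y, wsubset X Y & wfinite Y]).
Proof.
case=> [_ Ffac _ UR]; split.
- move=> X bX XF [w [Fw nw]]; have [n [n1 Hn]] := UR w Fw.
  apply: (@bounded_finite A X n) => x Xx; rewrite leqNgt; apply/negP => hx.
  have Ft : F (take n x) by apply: Ffac (XF x Xx) _; exact: infix_take.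
  have fw := Hn _ Ft (size_takel (ltnW hx)).
  by move: (nw x Xx); rewrite /factor (infix_trans fw (infix_take _ _)).
- move=> X bX XF [s Hs].
  have [L0 HL0] := list_bound s.
  have XL : forall x, X x -> size x <= L0 by move=> x /Hs; exact: HL0.
  have [B HB] := unif_bound L0.+1 UR.
  have [mx XY] := Y_props bX XF.
  exists (Ygr F X); split=> //.
  exact: (@bounded_finite A _ (B + L0 + 1) (Y_bounded Ffac bX XF XL HB)).
Qed.
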